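(* Let $\mu_1\in\mathcal{M}_+(S^1)$ with $\mu_1\neq0$. Then the functional $\mathbb{S}_{\mu_1}:\mathcal{M}(S^1)\to[0,+\infty]$ defined by $\mathbb{S}_{\mu_1}(0)=0$ and \[ \mathbb{S}_{\mu_1}(\mu_0):=\frac{|\mu_0|(S^1)}{2}\,\mathcal{U}^2\Big(\frac{\mu_0}{|\mu_0|(S^1)},\frac{\mu_1}{|\mu_1|(S^1)}\Big)\quad(\mu_0\neq0) \] is convex and positively one-homogeneous.
   Context: $S^1$ is the unit circle in $\mathbb{C}$; $\mathcal{M}(S^1)$ is the space of finite signed Radon measures and $|\mu|$ the total variation measure. Wasserstein–Fisher–Rao distance: for $\mu_0,\mu_1\in\mathcal{M}(S^1)$, let $\Gamma(\mu_0,\mu_1)$ be the set of nonnegative Borel measures $\gamma$ on $\mathbb{C}\times\mathbb{C}$ with finite second moment such that $(\theta_i)_\#(r_i^2\gamma)=\mu_i$, $i=0,1$, with $r_i(x_0,x_1)=|x_i|$, $\theta_i(x_0,x_1)=x_i/|x_i|$ (a fixed arbitrary point of $S^1$ if $x_i=0$); $\mathcal{U}(\mu_0,\mu_1):=\inf_{\gamma\in\Gamma(\mu_0,\mu_1)}(\int|x-y|^2\,\mathrm{d}\gamma)^{1/2}$, and $\mathcal{U}=+\infty$ if $\Gamma$ is empty (in particular whenever one of the measures is not nonnegative). *)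

(* Defs.v *)
From HB Require Import structures.
From mathcomp Require Import all_boot all_order all_algebra.
From mathcomp Require Import all_classical all_reals all_analysis.
Set Implicit Arguments. Unset Strict Implicit. Unset Printing Implicit Defensive.
Import Order.TTheory GRing.Theory Num.Theory.
Import numFieldNormedType.Exports.
Local Open Scope classical_set_scope.
Local Open Scope ring_scope.

(* The complex plane C is modelled as R * R (its product sigma-algebra is the
   Borel sigma-algebra of R^2); C x C is (R * R) * (R * R). *)

Section WFR.
Variable R : realType.
Notation C := (R * R)%type.

Definition nrm2 (x : C) : R := x.1 ^+ 2 + x.2 ^+ 2.
Definition dist2 (x y : C) : R := (x.1 - y.1) ^+ 2 + (x.2 - y.2) ^+ 2.

Definition S1 : set C := [set x | nrm2 x = 1].

Definition theta (x : C) : C :=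
  if x == (0, 0) then (1, 0)
  else (x.1 / Num.sqrt (nrm2 x), x.2 / Num.sqrt (nrm2 x)).

(* a (signed) set function on C is concentrated on S^1 (element of M(S^1)) *)
Definition on_S1 (mu : set C -> \bar R) : Prop :=
  forall A, measurable A -> mu A = mu (A `&` S1).

Definition totvar (mu : set C -> \bar R) (D : set C) : \bar R :=
  ereal_sup [set s | exists (n : nat) (F : nat -> set C),
    [/\ forall i, measurable (F i), trivIset `I_n F,
        \bigcup_(i in `I_n) F i = D & s = (\sum_(i < n) `|mu (F i)|)%E]].

(* Gamma(mu0, mu1): nonnegative Borel measures gamma on C x C with finite
   second moment and (theta_i)_# (r_i^2 gamma) = mu_i, i = 0, 1 *)
Definition WFR_plan (mu0 mu1 : set C -> \bar R)
    (g : {measure set (C * C)%type -> \bar R}) : Prop :=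
  [/\ (\int[g]_z (nrm2 z.1 + nrm2 z.2)%:E < +oo)%E,
      (forall A : set C, measurable A ->
         (\int[g]_(z in (theta \o fst) @^-1` A) (nrm2 z.1)%:E)%E = mu0 A) &
      (forall A : set C, measurable A ->
         (\int[g]_(z in (theta \o snd) @^-1` A) (nrm2 z.2)%:E)%E = mu1 A)].

Definition WFR2 (mu0 mu1 : set C -> \bar R) : \bar R :=
  ereal_inf [set c | exists g : {measure set (C * C)%type -> \bar R},
    WFR_plan mu0 mu1 g /\ c = (\int[g]_z (dist2 z.1 z.2)%:E)%E].

(* normalization mu / |mu|(S^1) (|mu|(S^1) is finite for finite measures) *)
Definition normalize (mu : set C -> \bar R) : set C -> \bar R :=
  fun A => (mu A * ((fine (totvar mu S1))^-1)%:E)%E.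

Definition Sfun (mu1 mu0 : set C -> \bar R) : \bar R :=
  if `[< forall A, measurable A -> mu0 A = 0%E >] then 0%E
  else ((fine (totvar mu0 S1) / 2)%:E * WFR2 (normalize mu0) (normalize mu1))%E.

End WFR.

(* Main.v *)
Require Import Defs.
From HB Require Import structures.
From mathcomp Require Import all_boot all_order all_algebra.
From mathcomp Require Import all_classical all_reals all_analysis.
From mathcomp Require Import measurable_realfun.
From mathcomp Require Import ring lra.
Import Order.TTheory GRing.Theory Num.Theory.
Local Open Scope classical_set_scope.
Local Open Scope ring_scope.

Local Open Scope ereal_scope.
Lemma inf_comb (R : realType) (S T U : set (\bar R)) (a b : R) :
  (0 < a)%R -> (0 < b)%R -> (a + b = 1)%R ->
  (forall x, S x -> 0 <= x) -> (forall y, T y -> 0 <= y) ->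
  (forall x y, S x -> T y -> ereal_inf U <= a%:E * x + b%:E * y) ->
  ereal_inf U <= a%:E * ereal_inf S + b%:E * ereal_inf T.
Proof.
move=> a0 b0 ab S0 T0 H.
have iS0 : 0 <= ereal_inf S by apply/ereal_infP => x /S0.
have iT0 : 0 <= ereal_inf T by apply/ereal_infP => x /T0.
have aS0 : 0 <= a%:E * ereal_inf S by rewrite mule_ge0 // lee_fin ltW.
have bT0 : 0 <= b%:E * ereal_inf T by rewrite mule_ge0 // lee_fin ltW.
case eS: (ereal_inf S) => [s| |]; rewrite eS in iS0 aS0 => //; last first.
  by rewrite mulry gtr0_sg // mul1e addye ?leey // gt_eqF // (lt_le_trans _ bT0).
case eT: (ereal_inf T) => [t| |]; rewrite eT in iT0 bT0 => //; last first.
  by rewrite mulry gtr0_sg // mul1e addey ?leey // gt_eqF // (lt_le_trans _ aS0).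
apply/lee_addgt0Pr => e e0.
have [x Sx xlt] : exists2 x, S x & x < (s + e)%:E.
  by apply: ereal_inf_lt; rewrite eS lte_fin ltrDl.
have [y Ty ylt] : exists2 y, T y & y < (t + e)%:E.
  by apply: ereal_inf_lt; rewrite eT lte_fin ltrDl.
apply: (le_trans (H _ _ Sx Ty)).
have x0 := S0 _ Sx; have y0 := T0 _ Ty.
case: x x0 xlt {Sx} => [x| |] //; case: y y0 ylt {Ty} => [y| |] //.
rewrite !lee_fin !lte_fin => y0 ylt x0 xlt.
have -> : e = (a * e + b * e)%R by rewrite -mulrDl ab mul1r.
nra.
Qed.

Local Close Scope ereal_scope.

Section M.
Variable R : realType.
Local Notation C := (R * R)%type.

Lemma mfst1 : measurable_fun [set: C] (fun x : C => x.1).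
Proof. exact: measurable_fst. Qed.
Lemma msnd1 : measurable_fun [set: C] (fun x : C => x.2).
Proof. exact: measurable_snd. Qed.

Lemma m_nrm2 : measurable_fun [set: C] (@nrm2 R).
Proof.
rewrite /nrm2; apply: measurable_funD; apply: measurable_funX.
exact: mfst1. exact: msnd1.
Qed.

Lemma theta_eq (x : C) : theta x =
  if (x.1 == 0) && (x.2 == 0) then (1, 0)
  else (x.1 * (nrm2 x `^ (- 2^-1)), x.2 * (nrm2 x `^ (- 2^-1))).
Proof.
rewrite /theta; case: x => a b /=; rewrite xpair_eqE.
case: ifP => // _.
have h : nrm2 (a, b) `^ (- 2^-1) = (Num.sqrt (nrm2 (a, b)))^-1.
  by rewrite powRN powR12_sqrt // /nrm2 addr_ge0 // sqr_ge0.
by rewrite h.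
Qed.

Lemma m_theta : measurable_fun [set: C] (@theta R).
Proof.
rewrite (_ : @theta R = fun x : C => if (x.1 == 0) && (x.2 == 0) then (1, 0)
  else (x.1 * (nrm2 x `^ (- 2^-1)), x.2 * (nrm2 x `^ (- 2^-1)))).
  2: by apply/funext => x; rewrite theta_eq.
have mp : measurable_fun [set: C] (fun x : C => nrm2 x `^ (- 2^-1)).
  exact: (measurableT_comp (measurable_powR _) m_nrm2).
apply: measurable_fun_ifT.
- apply: measurable_and.
  + apply: measurable_fun_eqr; [exact: mfst1|exact: measurable_cst].
  + apply: measurable_fun_eqr; [exact: msnd1|exact: measurable_cst].
- exact: measurable_cst.
- apply: measurable_fun_pair.
  + exact: (measurable_funM mfst1 mp).
  + exact: (measurable_funM msnd1 mp).
Qed.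


Local Open Scope ereal_scope.

Lemma m_thf A : measurable A ->
  measurable ((@theta R \o fst) @^-1` A : set (C * C)%type).
Proof.
move=> mA; rewrite -[X in measurable X]setTI.
exact: (measurableT_comp m_theta measurable_fst) measurableT A mA.
Qed.

Lemma m_ths A : measurable A ->
  measurable ((@theta R \o snd) @^-1` A : set (C * C)%type).
Proof.
move=> mA; rewrite -[X in measurable X]setTI.
exact: (measurableT_comp m_theta measurable_snd) measurableT A mA.
Qed.

Lemma m_n1 : measurable_fun [set: (C * C)%type] (fun z : C * C => (nrm2 z.1)%:E).
Proof.
apply/measurable_EFinP; exact: (measurableT_comp m_nrm2 measurable_fst).
Qed.

Lemma m_n2 : measurable_fun [set: (C * C)%type] (fun z : C * C => (nrm2 z.2)%:E).
Proof.
apply/measurable_EFinP; exact: (measurableT_comp m_nrm2 measurable_snd).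
Qed.

Lemma m_n12 : measurable_fun [set: (C * C)%type]
   (fun z : C * C => (nrm2 z.1 + nrm2 z.2)%:E).
Proof.
apply/measurable_EFinP; apply: measurable_funD.
exact: (measurableT_comp m_nrm2 measurable_fst).
exact: (measurableT_comp m_nrm2 measurable_snd).
Qed.

Lemma m_d2 : measurable_fun [set: (C * C)%type]
   (fun z : C * C => (dist2 z.1 z.2)%:E).
Proof.
apply/measurable_EFinP; rewrite /dist2; apply: measurable_funD;
  apply: measurable_funX; apply: measurable_funB.
- exact: (measurableT_comp mfst1 measurable_fst).
- exact: (measurableT_comp mfst1 measurable_snd).
- exact: (measurableT_comp msnd1 measurable_fst).
- exact: (measurableT_comp msnd1 measurable_snd).
Qed.

Lemma int_comb (a b : {nonneg R}) (g1 g2 : {measure set (C * C)%type -> \bar R})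
  (D : set (C * C)%type) (f : C * C -> \bar R) :
  measurable D -> measurable_fun [set: (C * C)%type] f ->
  (forall z, 0 <= f z) ->
  \int[measure_add (mscale a g1) (mscale b g2)]_(z in D) f z =
  a%:num%:E * \int[g1]_(z in D) f z + b%:num%:E * \int[g2]_(z in D) f z.
Proof.
move=> mD mf f0.
rewrite ge0_integral_measure_add //; last exact: measurable_funTS.
rewrite !ge0_integral_mscale //; exact: measurable_funTS.
Qed.

Lemma plan_comb (p q m r : set C -> \bar R) (a b : {nonneg R})
  (g1 g2 : {measure set (C * C)%type -> \bar R}) :
  (a%:num + b%:num = 1)%R ->
  (forall A, measurable A -> r A = a%:num%:E * p A + b%:num%:E * q A) ->
  WFR_plan p m g1 -> WFR_plan q m g2 ->
  WFR_plan r m (measure_add (mscale a g1) (mscale b g2)) /\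
  \int[measure_add (mscale a g1) (mscale b g2)]_z (dist2 z.1 z.2)%:E =
  a%:num%:E * \int[g1]_z (dist2 z.1 z.2)%:E + b%:num%:E * \int[g2]_z (dist2 z.1 z.2)%:E.
Proof.
move=> ab1 hr [f1 p1 m1] [f2 q2 m2].
have n0 : forall z : C * C, 0 <= (nrm2 z.1)%:E.
  by move=> z; rewrite lee_fin /nrm2 addr_ge0 // sqr_ge0.
have n0' : forall z : C * C, 0 <= (nrm2 z.2)%:E.
  by move=> z; rewrite lee_fin /nrm2 addr_ge0 // sqr_ge0.
split; last first.
  apply: int_comb => //; first exact: m_d2.
  by move=> z; rewrite lee_fin /dist2 addr_ge0 // sqr_ge0.
split.
- rewrite int_comb //; last 2 first.
  + exact: m_n12.
  + by move=> z; rewrite lee_fin addr_ge0 // /nrm2 addr_ge0 // sqr_ge0.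
  apply: lte_add_pinfty; apply: lte_mul_pinfty => //.
- move=> A mA; rewrite int_comb //; last exact: m_n1; last exact: m_thf.
  by rewrite p1 // q2 // hr.
- move=> A mA; rewrite int_comb //; last exact: m_n2; last exact: m_ths.
  rewrite m1 // m2 // -ge0_muleDl //.
  by rewrite -EFinD ab1 mul1e.
Qed.


Lemma mS1 : measurable (@S1 R).
Proof.
rewrite /S1 -[X in measurable X]setTI.
exact: m_nrm2 measurableT [set 1%R] (measurable_set1 _).
Qed.

Lemma part_sum (nu : {charge set C -> \bar R}) n (F : nat -> set C) :
  (forall i, measurable (F i)) -> trivIset `I_n F ->
  \sum_(i < n) nu (F i) = nu (\bigcup_(i in `I_n) F i).
Proof.
move=> mF tF.
pose G k := if (k < n)%N then F k else set0.
have mG : forall k, measurable (G k) by move=> k; rewrite /G; case: ifP.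
have tG : trivIset setT G.
  move=> i j _ _; rewrite /G; case: ifP => hi; case: ifP => hj //;
    try by move=> [x []].
  by apply: tF.
have e1 : \bigcup_(i in `I_n) F i = \big[setU/set0]_(i < n) G i.
  rewrite -bigcup_mkord; apply: eq_bigcupr => i /= hi.
  by rewrite /G; move: hi => /= ->.
rewrite e1 charge_semi_additive //; last by rewrite -e1; exact: bigcup_measurable.
by apply: eq_bigr => i _; rewrite /G ltn_ord.
Qed.


Local Notation SS := (@S1 R).

Lemma S1_part1 : exists n (F : nat -> set C),
  [/\ forall i, measurable (F i), trivIset `I_n F,
      \bigcup_(i in `I_n) F i = SS & n = 1%N /\ F 0%N = SS].
Proof.
exists 1%N, (fun _ => SS); split => //.
- by move=> i; exact: mS1.
- by move=> i j /= hi hj _; move: hi hj; rewrite /= !ltnS !leqn0 => /eqP -> /eqP ->.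
- apply/seteqP; split => [x [i _ //]|x hx]; by exists 0%N.
Qed.

Lemma totvar_ge0 (mu : set C -> \bar R) : 0 <= totvar mu SS.
Proof.
apply: le_ereal_sup_tmp; exists (\sum_(i < 1) `|mu SS|).
  exists 1%N, (fun _ => SS); split => //.
  - by move=> i; exact: mS1.
  - by move=> i j /= hi hj _; move: hi hj; rewrite /= !ltnS !leqn0 => /eqP -> /eqP ->.
  - apply/seteqP; split => [x [i _ //]|x hx]; by exists 0%N.
by rewrite big_ord1.
Qed.

Lemma totvar_scale (mu rho : set C -> \bar R) (lam : R) D : (0 < lam)%R ->
  (forall A, measurable A -> rho A = lam%:E * mu A) ->
  totvar rho D = lam%:E * totvar mu D.
Proof.
move=> l0 hr; rewrite /totvar -ereal_sup_pZl //; congr ereal_sup.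
apply/seteqP; split => s.
- move=> [n [F [mF tF uF ->]]].
  exists (\sum_(i < n) `|mu (F i)|); first by exists n, F.
  rewrite ge0_sume_distrr //; apply: eq_bigr => i _.
  by rewrite hr // abseM (@gee0_abs _ lam%:E) // lee_fin ltW.
- move=> [x [n [F [mF tF uF ->]]] <-].
  exists n, F; split => //.
  rewrite ge0_sume_distrr //; apply: eq_bigr => i _.
  by rewrite hr // abseM (@gee0_abs _ lam%:E) // lee_fin ltW.
Qed.

Lemma totvar_pos (mu : {charge set C -> \bar R}) :
  (forall A, measurable A -> 0 <= mu A) -> totvar mu SS = mu SS.
Proof.
move=> h0; rewrite /totvar.
rewrite (_ : [set _ | _] = [set mu SS]) ?ereal_sup1 //.
apply/seteqP; split => s.
- move=> [n [F [mF tF uF ->]]] /=.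
  rewrite -uF -part_sum //; apply: eq_bigr => i _; rewrite gee0_abs //; exact: h0.
- move=> -> /=; exists 1%N, (fun _ => SS); split => //.
  + by move=> i; exact: mS1.
  + by move=> i j /= hi hj _; move: hi hj; rewrite /= !ltnS !leqn0 => /eqP -> /eqP ->.
  + apply/seteqP; split => [x [i _ //]|x hx]; by exists 0%N.
  + by rewrite big_ord1 gee0_abs //; apply: h0; exact: mS1.
Qed.

Lemma totvar_fin (mu : {charge set C -> \bar R}) : totvar mu SS \is a fin_num.
Proof.
have [P [N PN]] := Hahn_decomposition mu.
have cvfin : charge_variation PN SS \is a fin_num.
  by apply: fin_num_measure; exact: mS1.
rewrite ge0_fin_numE ?totvar_ge0 //.
have cvlt : charge_variation PN SS < +oo by move: cvfin => /fin_numPlt /andP[].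
apply: (le_lt_trans _ cvlt).
apply/ereal_supP => s [n [F [mF tF uF ->]]].
rewrite -uF -part_sum //; apply: lee_sum => i _.
exact: abse_charge_variation.
Qed.

Lemma totvar_ge (mu : {charge set C -> \bar R}) A : measurable A ->
  `|mu (A `&` SS)| <= totvar mu SS.
Proof.
move=> mA; apply: le_ereal_sup_tmp.
pose F k := if k == 0%N then A `&` SS else if k == 1%N then SS `\` A else set0.
exists (\sum_(i < 2) `|mu (F i)|).
  exists 2%N, F; split => //.
  - move=> i; rewrite /F; case: ifP => _; first exact: measurableI mA mS1.
    by case: ifP => _ //; exact: measurableD mS1 mA.
  - move=> i j /= hi hj; rewrite /F.
    move: hi hj; case: i => [|[|i]] // _; case: j => [|[|j]] //= _.
    + by move=> [x [[xA _] [_ nA]]].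
    + by move=> [x [[_ nA] [xA _]]].
  - apply/seteqP; split.
    + move=> x [i /= hi]; rewrite /F; move: hi; case: i => [|[|i]] //= _.
      * by case.
      * by case.
    + move=> x hx; case: (pselect (A x)) => ax.
      * by exists 0%N => //.
      * by exists 1%N => //.
rewrite big_ord_recl big_ord1 /F /=.
by apply: leeDl.
Qed.


Lemma WFR_plan_ext (p p' m : set C -> \bar R) g :
  (forall A, measurable A -> p A = p' A) -> WFR_plan p m g -> WFR_plan p' m g.
Proof. by move=> h [h1 h2 h3]; split => // A mA; rewrite -h // h2. Qed.

Lemma WFR2_ext (p p' m : set C -> \bar R) :
  (forall A, measurable A -> p A = p' A) -> WFR2 p m = WFR2 p' m.
Proof.
move=> h; rewrite /WFR2; congr ereal_inf; apply/seteqP; split => c [g [pg ->]];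
  exists g; split => //; apply: WFR_plan_ext pg => A mA; by rewrite h.
Qed.

Lemma WFR2_ge0 (p m : set C -> \bar R) : 0 <= WFR2 p m.
Proof.
apply/ereal_infP => c [g [_ ->]]; apply: integral_ge0 => z _.
by rewrite lee_fin /dist2 addr_ge0 // sqr_ge0.
Qed.

Lemma WFR2_neg (p m : set C -> \bar R) A : measurable A -> p A < 0 ->
  WFR2 p m = +oo.
Proof.
move=> mA pA; rewrite /WFR2; apply/ereal_inf_pinfty => c [g [[_ h _] _]].
exfalso; move: pA; rewrite -h // ltNge integral_ge0 // => z _.
by rewrite lee_fin /nrm2 addr_ge0 // sqr_ge0.
Qed.

Lemma Sfun_ge0 (m1 mu : set C -> \bar R) : 0 <= Sfun m1 mu.
Proof.
rewrite /Sfun; case: ifP => // _; rewrite mule_ge0 ?WFR2_ge0 // lee_fin.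
by rewrite divr_ge0 // fine_ge0 // totvar_ge0.
Qed.

Lemma Zeq (mu rho : set C -> \bar R) (lam : R) : (0 < lam)%R ->
  (forall A, measurable A -> rho A = lam%:E * mu A) ->
  `[< forall A, measurable A -> rho A = 0 >] =
  `[< forall A, measurable A -> mu A = 0 >].
Proof.
move=> l0 h; apply/asbool_equiv_eq; split => H A mA.
- have := H A mA; rewrite h // => /eqP; rewrite mule_eq0 eqe gt_eqF //= => /eqP.
  done.
- by rewrite h // H // mule0.
Qed.

Lemma Sfun_hom (m1 mu rho : set C -> \bar R) (lam : R) : (0 < lam)%R ->
  (forall A, measurable A -> rho A = lam%:E * mu A) ->
  Sfun m1 rho = lam%:E * Sfun m1 mu.
Proof.
move=> l0 h; rewrite /Sfun (@Zeq mu rho lam l0 h); case: ifP => _; first by rewrite mule0.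
have tv := @totvar_scale mu rho lam SS l0 h.
have fe : fine (totvar rho SS) = (lam * fine (totvar mu SS))%R.
  rewrite tv; case: (totvar mu SS) => [r| |].
  - by rewrite -EFinM.
  - by rewrite mulry gtr0_sg // mul1e mulr0.
  - by rewrite mulrNy gtr0_sg // mul1e mulr0.
rewrite (@WFR2_ext (normalize rho) (normalize mu)); last first.
  move=> A mA; rewrite /normalize fe h // invfM (muleC lam%:E) -muleA -EFinM.
  by rewrite mulrA mulfV ?gt_eqF // mul1r.
rewrite fe muleA -EFinM mulrA.
done.
Qed.


Lemma Sfun_pos (m1 : set C -> \bar R) (mu : {charge set C -> \bar R}) :
  on_S1 mu -> ~ (forall A, measurable A -> mu A = 0) -> Sfun m1 mu != +oo ->
  forall A, measurable A -> 0 <= mu A.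
Proof.
move=> oS nZ fin A mA; rewrite leNgt; apply/negP => neg.
have muf : mu A \is a fin_num by apply: fin_num_measure.
have tvg := totvar_ge mu A mA; rewrite -oS // in tvg.
have tvf := totvar_fin mu.
have fpos : (0 < fine (totvar mu SS))%R.
  apply: fine_gt0; apply/andP; split; last by move: tvf => /fin_numPlt /andP[].
  apply: lt_le_trans tvg; by rewrite lte0_abs // oppe_gt0.
have W : WFR2 (normalize mu) (normalize m1) = +oo.
  apply: (@WFR2_neg _ _ A mA); rewrite /normalize -(fineK muf) -EFinM lte_fin.
  rewrite pmulr_llt0 ?invr_gt0 //; by rewrite -lte_fin fineK.
move: fin; rewrite /Sfun asboolF // W mulry gtr0_sg ?mul1e //.
by rewrite divr_gt0.
Qed.


Lemma tv_pos (mu : {charge set C -> \bar R}) :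
  on_S1 mu -> ~ (forall A, measurable A -> mu A = 0) ->
  (0 < fine (totvar mu SS))%R.
Proof.
move=> oS nZ.
have [A [mA nz]] : exists A, measurable A /\ mu A != 0.
  apply: contrapT => H; apply: nZ => A mA; apply/eqP; apply: contrapT => nz.
  by apply: H; exists A; split => //; apply/negP.
have tvg := totvar_ge mu A mA; rewrite -oS // in tvg.
have tvf := totvar_fin mu.
apply: fine_gt0; apply/andP; split; last by move: tvf => /fin_numPlt /andP[].
apply: lt_le_trans tvg; by rewrite lt_neqAle abse_ge0 andbT eq_sym abse_eq0.
Qed.

Lemma conv_core (m1 : set C -> \bar R) (mu nu rho : {charge set C -> \bar R})
  (t : R) : (0 < t)%R -> (t < 1)%R -> on_S1 mu -> on_S1 nu ->
  ~ (forall A, measurable A -> mu A = 0) ->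
  ~ (forall A, measurable A -> nu A = 0) ->
  (forall A, measurable A -> 0 <= mu A) ->
  (forall A, measurable A -> 0 <= nu A) ->
  (forall A, measurable A -> rho A = t%:E * mu A + (1 - t)%:E * nu A) ->
  Sfun m1 rho <= t%:E * Sfun m1 mu + (1 - t)%:E * Sfun m1 nu.
Proof.
move=> t0 t1 oSm oSn nZm nZn mu0 nu0 hr.
have hM := tv_pos mu oSm nZm; have hN := tv_pos nu oSn nZn.
set M := fine (totvar mu SS) in hM *; set N := fine (totvar nu SS) in hN *.
have tvmu : totvar mu SS = M%:E by rewrite fineK // totvar_fin.
have tvnu : totvar nu SS = N%:E by rewrite fineK // totvar_fin.
have rho0 : forall A, measurable A -> 0 <= rho A.
  move=> A mA; rewrite hr //; apply: adde_ge0; apply: mule_ge0.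
  - by rewrite lee_fin ltW.
  - exact: mu0.
  - by rewrite lee_fin subr_ge0 ltW.
  - exact: nu0.
pose P := (t * M + (1 - t) * N)%R.
have hP : (0 < P)%R.
  by rewrite /P addr_gt0 // mulr_gt0 // subr_gt0.
have tvrho : totvar rho SS = P%:E.
  have emu : mu SS = M%:E by rewrite -(totvar_pos mu mu0).
  have enu : nu SS = N%:E by rewrite -(totvar_pos nu nu0).
  rewrite (totvar_pos rho rho0) hr; last exact: mS1.
  by rewrite emu enu -!EFinM -EFinD.
have nZr : ~ (forall A, measurable A -> rho A = 0).
  move=> H; move: (H _ mS1); rewrite -(totvar_pos rho rho0) tvrho => /eqP.
  by rewrite eqe gt_eqF.
rewrite /Sfun !asboolF // tvrho -/M -/N.
have fP : fine P%:E = P by [].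
rewrite fP.
pose a := (t * M / P)%R; pose b := ((1 - t) * N / P)%R.
have a0 : (0 < a)%R by rewrite /a divr_gt0 // mulr_gt0.
have b0 : (0 < b)%R by rewrite /b divr_gt0 // mulr_gt0 // subr_gt0.
have ab1 : (a + b = 1)%R.
  by rewrite /a /b -mulrDl mulfV // gt_eqF.
have hr' : forall A, measurable A ->
    normalize rho A = a%:E * normalize mu A + b%:E * normalize nu A.
  move=> A mA; rewrite /normalize tvrho tvmu tvnu /= hr //.
  have fm : mu A \is a fin_num by apply: fin_num_measure.
  have fn : nu A \is a fin_num by apply: fin_num_measure.
  rewrite -(fineK fm) -(fineK fn) -!EFinM -!EFinD; congr EFin.
  rewrite /a /b; field.
  by rewrite !gt_eqF.
have key : WFR2 (normalize rho) (normalize m1) <=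
    a%:E * WFR2 (normalize mu) (normalize m1) +
    b%:E * WFR2 (normalize nu) (normalize m1).
  apply: inf_comb => //.
  - by move=> x [g [_ ->]]; apply: integral_ge0 => z _;
      rewrite lee_fin /dist2 addr_ge0 // sqr_ge0.
  - by move=> x [g [_ ->]]; apply: integral_ge0 => z _;
      rewrite lee_fin /dist2 addr_ge0 // sqr_ge0.
  move=> _ _ [g1 [p1 ->]] [g2 [p2 ->]].
  have [pl cost] := @plan_comb (normalize mu) (normalize nu) (normalize m1)
    (normalize rho) (NngNum (ltW a0)) (NngNum (ltW b0)) g1 g2 ab1 hr' p1 p2.
  apply: ereal_inf_lbound; eexists; split; first exact: pl.
  by rewrite cost.
have P2 : (0 <= P / 2)%R by rewrite divr_ge0 // ltW.
have P2' : 0 <= (P / 2)%:E by rewrite lee_fin.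
apply: (le_trans (lee_wpmul2l P2' key)).
rewrite ge0_muleDr; last 2 first.
  by apply: mule_ge0; [rewrite lee_fin ltW|exact: WFR2_ge0].
  by apply: mule_ge0; [rewrite lee_fin ltW|exact: WFR2_ge0].
rewrite !muleA -!EFinM.
have e1 : (P / 2 * a = t * (M / 2))%R by rewrite /a; field; rewrite gt_eqF.
have e2 : (P / 2 * b = (1 - t) * (N / 2))%R by rewrite /b; field; rewrite gt_eqF.
by rewrite e1 e2.
Qed.

End M.


Theorem proposition4p6 (R : realType)
  (mu1 : {charge set (R * R)%type -> \bar R}) :
  on_S1 mu1 ->
  (forall A, measurable A -> (0 <= mu1 A)%E) ->
  (exists A, measurable A /\ mu1 A <> 0%E) ->
  (* convexity *)
  (forall (mu nu rho : {charge set (R * R)%type -> \bar R}) (t : R),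
     0 <= t <= 1 -> on_S1 mu -> on_S1 nu -> on_S1 rho ->
     (forall A, measurable A -> rho A = (t%:E * mu A + (1 - t)%:E * nu A)%E) ->
     (Sfun mu1 rho <= t%:E * Sfun mu1 mu + (1 - t)%:E * Sfun mu1 nu)%E)
  /\
  (* positive one-homogeneity *)
  (forall (mu rho : {charge set (R * R)%type -> \bar R}) (lam : R),
     0 < lam -> on_S1 mu -> on_S1 rho ->
     (forall A, measurable A -> rho A = (lam%:E * mu A)%E) ->
     Sfun mu1 rho = (lam%:E * Sfun mu1 mu)%E).
Proof.
Local Open Scope ereal_scope.
move=> _ _ _; split; last first.
  by move=> mu rho lam l0 _ _ hr; exact: Sfun_hom.
move=> mu nu rho t /andP[t0 t1] oSm oSn oSr hr.
rewrite le_eqVlt in t0; case/orP: t0 => [/eqP t0|t0].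
  rewrite -t0 mul0e add0e subr0 mul1e.
  rewrite (@Sfun_hom R mu1 nu rho 1%R) ?mul1e //.
  by move=> A mA; rewrite hr // -t0 mul0e add0e subr0.
rewrite le_eqVlt in t1; case/orP: t1 => [/eqP t1|t1].
  rewrite t1 subrr mul0e adde0 mul1e.
  rewrite (@Sfun_hom R mu1 mu rho 1%R) ?mul1e //.
  by move=> A mA; rewrite hr // t1 subrr mul0e adde0.
have t1' : (0 < 1 - t)%R by rewrite subr_gt0.
have S0m := @Sfun_ge0 R mu1 mu; have S0n := @Sfun_ge0 R mu1 nu.
have [Smu|Smu] := eqVneq (Sfun mu1 mu) +oo.
  have hpos : 0 <= (1 - t)%:E * Sfun mu1 nu.
    by apply: mule_ge0 => //; rewrite lee_fin ltW.
  rewrite Smu mulry gtr0_sg // mul1e addye ?leey //.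
  by rewrite (gt_eqF (lt_le_trans ltNy0 hpos)).
have [Snu|Snu] := eqVneq (Sfun mu1 nu) +oo.
  have hpos : 0 <= t%:E * Sfun mu1 mu.
    by apply: mule_ge0 => //; rewrite lee_fin ltW.
  rewrite Snu mulry gtr0_sg // mul1e addey ?leey //.
  by rewrite (gt_eqF (lt_le_trans ltNy0 hpos)).
case: (pselect (forall A, measurable A -> mu A = 0)) => Zm.
  have -> : Sfun mu1 mu = 0 by rewrite /Sfun asboolT.
  rewrite mule0 add0e (@Sfun_hom R mu1 nu rho (1 - t)%R) //.
  by move=> A mA; rewrite hr // Zm // mule0 add0e.
case: (pselect (forall A, measurable A -> nu A = 0)) => Zn.
  have -> : Sfun mu1 nu = 0 by rewrite /Sfun asboolT.
  rewrite mule0 adde0 (@Sfun_hom R mu1 mu rho t) //.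
  by move=> A mA; rewrite hr // Zn // mule0 adde0.
apply: conv_core => //.
- exact: (@Sfun_pos R mu1 mu oSm Zm Smu).
- exact: (@Sfun_pos R mu1 nu oSn Zn Snu).
Qed.
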